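(* For all $k,\ell\in\mathbb Z$, in $\mathbb C_w[x,x^{-1},y,y^{-1}]$, \[ y^k x^\ell=\Big(\prod_{i=1}^\ell\prod_{j=1}^k w(i,j)\Big)x^\ell y^k=\Big(\prod_{i=1}^\ell W(i,k)\Big)x^\ell y^k . \]
   Context: Let $(w(s,t))_{s,t\in\mathbb Z}$ be commuting invertible variables. $\mathbb C_w[x,x^{-1},y,y^{-1}]$ is the associative unital $\mathbb C$-algebra generated by $x,x^{-1},y,y^{-1}$ and the $w(s,t)^{\pm1}$ subject to $x^{-1}x=xx^{-1}=1$, $y^{-1}y=yy^{-1}=1$, $yx=w(1,1)xy$, $x\,w(s,t)=w(s+1,t)\,x$, $y\,w(s,t)=w(s,t+1)\,y$ for all $s,t\in\mathbb Z$. Product convention: $\prod_{j=l}^m A_j=A_l\cdots A_m$ if $m>l-1$, $=1$ if $m=l-1$, $=A_{l-1}^{-1}A_{l-2}^{-1}\cdots A_{m+1}^{-1}$ if $m<l-1$. $W(s,t)=\prod_{j=1}^t w(s,j)$. *)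

(* Defs.v *)
From HB Require Import structures.
From mathcomp Require Import all_boot all_order all_algebra.
Set Implicit Arguments. Unset Strict Implicit. Unset Printing Implicit Defensive.
Import Order.TTheory GRing.Theory Num.Theory.
Local Open Scope ring_scope.

(* Product convention of the paper, for an int-indexed family A:
   prod_{j=l}^m A_j = A_l * ... * A_m                       if m > l-1,
                    = 1                                     if m = l-1,
                    = A_{l-1}^-1 * A_{l-2}^-1 * ... * A_{m+1}^-1  if m < l-1.
   (\prod_(i < n) F i = F 0 * F 1 * ... * F (n-1), in this order.) *)
Definition zprod (R : unitRingType) (l m : int) (A : int -> R) : R :=
  if (l - 1 <= m)%R then (\prod_(i < absz (m - l + 1)%R) A (l + (i : nat)%:Z))%R
  else (\prod_(i < absz (l - 1 - m)%R) (A (l - 1 - (i : nat)%:Z))^-1)%R.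

Definition Wp (R : unitRingType) (w : int -> int -> R) (s t : int) : R :=
  zprod 1 t (fun j => w s j).

(* Main.v *)
Require Import Defs.
From HB Require Import structures.
From mathcomp Require Import all_boot all_order all_algebra.
Import Order.TTheory GRing.Theory Num.Theory.
Local Open Scope ring_scope.

Lemma int_ind2 (P : int -> Prop) : P 0 -> (forall n, P n <-> P (n + 1)) -> forall n, P n.
Proof.
move=> P0 HS n; case: n => n.
  elim: n => [//|n IH]; have -> : Posz n.+1 = Posz n + 1 by rewrite -addn1 PoszD.
  exact: (proj1 (HS _)).
rewrite NegzE; elim: n => [|n IH].
  by apply: (proj2 (HS _)); rewrite addNr.
apply: (proj2 (HS _)).
by have -> : - (Posz n.+2) + 1 = - Posz n.+1 by
  rewrite -[n.+2]addn1 PoszD opprD addrNK.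
Qed.

Section Z.
Variable R : unitRingType.

Lemma zprod_pos (A : int -> R) (n : nat) : zprod 1 n A = \prod_(i < n) A (1 + (i : nat)%:Z).
Proof. by rewrite /zprod subrr lez_nat /= subrK. Qed.

Lemma zprod_neg (A : int -> R) (n : nat) : zprod 1 (- n.+1%:Z) A = \prod_(i < n.+1) (A (- (i : nat)%:Z))^-1.
Proof.
rewrite /zprod subrr.
have -> : (0 <= - n.+1%:Z) = false by [].
by rewrite add0r opprK /=; apply: eq_bigr => i _; rewrite sub0r.
Qed.

Lemma zprod_rec (A : int -> R) (hA : forall i, A i \is a GRing.unit) m :
  zprod 1 (m + 1) A = zprod 1 m A * A (m + 1).
Proof.
case: m => [n|n].
  by rewrite -PoszD addn1 !zprod_pos big_ord_recr /= -addn1 PoszD addrC.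
rewrite NegzE; case: n => [|n].
  by rewrite addNr zprod_neg big_ord1 mulVr // zprod_pos big_ord0.
have -> : - (Posz n.+2) + 1 = - Posz n.+1 by rewrite -[n.+2]addn1 PoszD opprD addrNK.
by rewrite !zprod_neg [\prod_(i < n.+2) _]big_ord_recr /= -mulrA mulVr // mulr1.
Qed.


Lemma zprod0 (A : int -> R) : zprod 1 0 A = 1.
Proof. by rewrite /zprod /= big_ord0. Qed.

Lemma prod_conj (u : R) (F G : nat -> R) n :
  (forall i, u * F i = G i * u) ->
  u * \prod_(i < n) F i = \prod_(i < n) G i * u.
Proof.
move=> h; elim: n => [|n IH]; first by rewrite !big_ord0 mulr1 mul1r.
by rewrite !big_ord_recr /= mulrA IH -!mulrA h.
Qed.

Lemma inv_conj (u a b : R) : a \is a GRing.unit -> b \is a GRing.unit ->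
  u * a = b * u -> u * a^-1 = b^-1 * u.
Proof.
move=> ha hb h; apply: (mulrI hb).
by rewrite mulrA -h mulrK // mulrA mulrV // mul1r.
Qed.

Lemma zprod_conj (u : R) (A B : int -> R) l m :
  (forall i, A i \is a GRing.unit) -> (forall i, B i \is a GRing.unit) ->
  (forall i, u * A i = B i * u) -> u * zprod l m A = zprod l m B * u.
Proof.
move=> hA hB h; rewrite /zprod; case: ifP => _.
  by apply: (@prod_conj u (fun i : nat => A (l + i%:Z)) (fun i : nat => B (l + i%:Z))).
by apply: (@prod_conj u (fun i : nat => (A (l - 1 - i%:Z))^-1) (fun i : nat => (B (l - 1 - i%:Z))^-1)) => i; apply: inv_conj.
Qed.

Lemma prod_unit (F : nat -> R) n : (forall i, F i \is a GRing.unit) ->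
  \prod_(i < n) F i \is a GRing.unit.
Proof.
move=> h; elim: n => [|n IH]; first by rewrite big_ord0 unitr1.
by rewrite big_ord_recr /= unitrMl.
Qed.

Lemma zprod_unit (A : int -> R) l m : (forall i, A i \is a GRing.unit) ->
  zprod l m A \is a GRing.unit.
Proof.
move=> h; rewrite /zprod; case: ifP => _.
  by apply: (@prod_unit (fun i : nat => A (l + i%:Z))).
by apply: (@prod_unit (fun i : nat => (A (l - 1 - i%:Z))^-1)) => i; rewrite unitrV.
Qed.

Lemma pow_conj (u : R) (f : int -> R) : u \is a GRing.unit ->
  (forall s, u * f s = f (s + 1) * u) -> forall n s, u ^ n * f s = f (s + n) * u ^ n.
Proof.
move=> hu hf; apply: int_ind2.
  by move=> s; rewrite expr0z mul1r mulr1 addr0.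
move=> n; split => H s.
  rewrite exprzDr // expr1z -mulrA hf mulrA H -!mulrA.
  by rewrite -addrA (addrC 1).
have e := hf (s - 1); rewrite subrK in e.
have e2 := H (s - 1); rewrite exprzDr // expr1z in e2.
apply: (mulIr hu); rewrite /= -mulrA -e mulrA e2 mulrA.
by rewrite (addrC n) addrA subrK.
Qed.

End Z.

Theorem lemma2 (R : unitRingType) (x y : R) (w : int -> int -> R)
  (hx : x \is a GRing.unit) (hy : y \is a GRing.unit)
  (hwu : forall s t, w s t \is a GRing.unit)
  (hwc : forall s t s' t', w s t * w s' t' = w s' t' * w s t)
  (hyx : y * x = w 1 1 * x * y)
  (hxw : forall s t, x * w s t = w (s + 1) t * x)
  (hyw : forall s t, y * w s t = w s (t + 1) * y) :
  forall k l : int,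
    y ^ k * x ^ l = zprod 1 l (fun i => zprod 1 k (fun j => w i j)) * x ^ l * y ^ k
    /\ y ^ k * x ^ l = zprod 1 l (fun i => Wp w i k) * x ^ l * y ^ k.
Proof.
have step1 : forall k, y ^ k * x = zprod 1 k (w 1) * x * y ^ k.
  apply: int_ind2; first by rewrite expr0z zprod0 mul1r mulr1.
  move=> k.
  have hyk : y ^ k * w 1 1 = w 1 (1 + k) * y ^ k.
    exact: (@pow_conj R y (w 1) hy (hyw 1) k 1).
  have key1 : y ^ (k + 1) * x = w 1 (k + 1) * (y ^ k * x) * y.
    by rewrite exprzDr // expr1z -mulrA hyx !mulrA hyk (addrC 1).
  have key2 : zprod 1 (k + 1) (w 1) * x * y ^ (k + 1)
      = w 1 (k + 1) * (zprod 1 k (w 1) * x * y ^ k) * y.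
    rewrite zprod_rec // exprzDr // expr1z !mulrA.
    have -> : zprod 1 k (w 1) * w 1 (k + 1) = w 1 (k + 1) * zprod 1 k (w 1).
      by symmetry; apply: zprod_conj => // i; apply: hwc.
    by [].
  split => H; first by rewrite key1 key2 H.
  apply: (mulrI (hwu 1 (k + 1))); apply: (mulIr hy); rewrite /=.
  by rewrite -key1 -key2.
move=> k l; suff : y ^ k * x ^ l = zprod 1 l (fun i => zprod 1 k (fun j => w i j)) * x ^ l * y ^ k.
  by move=> h; split.
move: l; apply: int_ind2; first by rewrite expr0z zprod0 mul1r mulr1 mul1r.
move=> l.
have hD : forall i, zprod 1 k (fun j => w i j) \is a GRing.unit.
  by move=> i; apply: zprod_unit.
have key1 : y ^ k * x ^ (l + 1) = (y ^ k * x ^ l) * x.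
  by rewrite exprzDr // expr1z mulrA.
have key2 : zprod 1 (l + 1) (fun i => zprod 1 k (fun j => w i j)) * x ^ (l + 1) * y ^ k
    = (zprod 1 l (fun i => zprod 1 k (fun j => w i j)) * x ^ l * y ^ k) * x.
  rewrite -!mulrA step1 zprod_rec // exprzDr // expr1z !mulrA.
  congr (_ * _ * _); rewrite -!mulrA; congr (_ * _).
  symmetry; apply: zprod_conj => // j.
  by rewrite (@pow_conj R x (fun s => w s j) hx (fun s => hxw s j)) (addrC 1).
split => H; first by rewrite key1 key2 H.
by apply: (mulIr hx); rewrite /= -key1 -key2.
Qed.
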